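(* In the setting of the adaptive implicit-explicit iteration described in the context, the generated sequence $\{(\lambda_k,\bm d_k)\}_{k\ge0}$ satisfies, for every $k\ge0$, $\lambda_k\ge0$, $\|\bm d_k\|_2\le r$, and $\lambda_k(\|\bm d_k\|_2-r)=0$.
   Context: Let $n\ge1$, $r>0$, $\bm g\in\mathbb R^n$ with $\bm g\neq0$, and $\bm H=\bm D+\bm T\in\mathbb R^{n\times n}$, where $\bm D$ is diagonal with nonnegative diagonal entries $D_{i,i}$ and $\bm T$ is symmetric. (In the paper, $\bm D$ and $\bm T$ are the parts of the Hessian of the discretized Landau–Brazovskii energy coming from the interaction and the bulk terms.) Let $f(\bm d)=\bm g^\top\bm d+\frac12\bm d^\top\bm H\bm d$, and consider the trust region subproblem $\min_{\|\bm d\|_2\le r}f(\bm d)$. Adaptive implicit-explicit iteration with step size $\eta>0$: set $\bm d_0=-r\bm g/\|\bm g\|_2$ and $\lambda_0=0$. For $k=0,1,2,\dots$ (run indefinitely): let $\bm b_k=\bm d_k-\eta(\bm g+\bm T\bm d_k)$ and $\phi_k(\lambda)=\sum_{i=1}^n\big([\bm b_k]_i/(1+\eta(D_{i,i}+\lambda))\big)^2$ for $\lambda\ge0$; set $\lambda_{k+1}=0$ if $\phi_k(0)\le r^2$, and otherwise let $\lambda_{k+1}>0$ be the (unique) solution of $\phi_k(\lambda)=r^2$; then $\bm d_{k+1}=(\bm I+\eta(\bm D+\lambda_{k+1}\bm I))^{-1}\bm b_k$. *)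

(* Defs.v *)
From HB Require Import structures.
From mathcomp Require Import all_boot all_order all_algebra.
Set Implicit Arguments. Unset Strict Implicit. Unset Printing Implicit Defensive.
Import Order.TTheory GRing.Theory Num.Theory.
Local Open Scope ring_scope.

Definition norm2 (R : rcfType) (n : nat) (v : 'cV[R]_n) : R :=
  Num.sqrt (\sum_(i < n) (v i 0) ^+ 2).

Definition aiie_phi (R : rcfType) (n : nat) (D : 'M[R]_n) (eta : R)
  (b : 'cV[R]_n) (lam : R) : R :=
  \sum_(i < n) (b i 0 / (1 + eta * (D i i + lam))) ^+ 2.

Definition aiie_b (R : rcfType) (n : nat) (T : 'M[R]_n) (g : 'cV[R]_n)
  (eta : R) (dk : 'cV[R]_n) : 'cV[R]_n :=
  dk - eta *: (g + T *m dk).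

Definition aiie_step (R : rcfType) (n : nat) (D T : 'M[R]_n) (g : 'cV[R]_n)
  (r eta : R) (dk : 'cV[R]_n) (lam1 : R) (d1 : 'cV[R]_n) : Prop :=
  let b := aiie_b T g eta dk in
  (aiie_phi D eta b 0 <= r ^+ 2 -> lam1 = 0) /\
  (r ^+ 2 < aiie_phi D eta b 0 -> 0 < lam1 /\ aiie_phi D eta b lam1 = r ^+ 2) /\
  d1 = invmx (1%:M + eta *: (D + lam1%:M)) *m b.

(* Main.v *)
Require Import Defs.
From HB Require Import structures.
From mathcomp Require Import all_boot all_order all_algebra.
Import Order.TTheory GRing.Theory Num.Theory.
Local Open Scope ring_scope.

Lemma step_entries (R : rcfType) (n : nat) (D : 'M[R]_n) (eta lam : R) (b : 'cV[R]_n) :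
  is_diag_mx D -> (forall i, 0 <= D i i) -> 0 < eta -> 0 <= lam ->
  forall i, (invmx (1%:M + eta *: (D + lam%:M)) *m b) i 0 =
            b i 0 / (1 + eta * (D i i + lam)).
Proof.
move=> /is_diag_mxP Dd Dp etap lamp.
set w := \row_(i < n) (1 + eta * (D i i + lam)).
have wpos : forall i, 0 < w 0 i.
  move=> i; rewrite mxE; apply: (lt_le_trans ltr01); rewrite lerDl.
  by apply: mulr_ge0; [exact: ltW | exact: addr_ge0].
have M_eq : 1%:M + eta *: (D + lam%:M) = diag_mx w.
  apply/matrixP => i j; rewrite !mxE.
  case: (eqVneq i j) => [<-|nij]; first by rewrite ?eqxx /= ?mulr1n.
  by rewrite /= !mulr0n Dd // addr0 mulr0 add0r.
set N := diag_mx (\row_(i < n) (w 0 i)^-1).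
have MN : diag_mx w *m N = 1%:M.
  apply/matrixP => i j; rewrite mul_diag_mx !mxE.
  have := wpos i; rewrite mxE => wi.
  case: (eqVneq i j) => [_|nij]; first by rewrite mulr1n divff // gt_eqF.
  by rewrite /= ?mulr0n ?mulr0.
have [Mu _] := mulmx1_unit MN.
have -> : invmx (1%:M + eta *: (D + lam%:M)) = N.
  by rewrite M_eq -[RHS](mulKmx Mu) MN mulmx1.
move=> i; rewrite mul_diag_mx !mxE mulrC.
done.
Qed.

Lemma norm_step (R : rcfType) (n : nat) (D : 'M[R]_n) (eta lam : R) (b : 'cV[R]_n) :
  is_diag_mx D -> (forall i, 0 <= D i i) -> 0 < eta -> 0 <= lam ->
  norm2 (invmx (1%:M + eta *: (D + lam%:M)) *m b) = Num.sqrt (aiie_phi D eta b lam).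
Proof.
move=> Dd Dp etap lamp; rewrite /norm2 /aiie_phi.
by congr Num.sqrt; apply: eq_bigr => i _; rewrite step_entries.
Qed.

Theorem mainTheorem3 (R : rcfType) (n : nat) (r eta : R) (g : 'cV[R]_n)
  (D T : 'M[R]_n) (lam : nat -> R) (d : nat -> 'cV[R]_n) :
  (0 < n)%N -> 0 < r -> g != 0 ->
  is_diag_mx D -> (forall i, 0 <= D i i) -> T^T = T -> 0 < eta ->
  d 0%N = (- r / norm2 g) *: g -> lam 0%N = 0 ->
  (forall k : nat, aiie_step D T g r eta (d k) (lam k.+1) (d k.+1)) ->
  forall k : nat,
    0 <= lam k /\ norm2 (d k) <= r /\ lam k * (norm2 (d k) - r) = 0.
Proof.
move=> _ rp _ Dd Dp _ etap d0 l0 Hstep [|k].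
  rewrite l0 mul0r; split => //; split => //.
  have ng0 : 0 <= norm2 g by rewrite /norm2 sqrtr_ge0.
  have -> : norm2 (d 0%N) = (r / norm2 g) * norm2 g.
    rewrite d0 {1}/norm2.
    under eq_bigr => i _ do rewrite mxE exprMn.
    rewrite -mulr_sumr sqrtrM ?sqr_ge0 // sqrtr_sqr mulNr normrN ger0_norm //.
    by rewrite divr_ge0 // ltW.
  have [->|nz] := eqVneq (norm2 g) 0; first by rewrite mulr0 ltW.
  by rewrite divfK.
have [H1 [H2 H3]] := Hstep k.
move: H1 H2 H3; set b := aiie_b T g eta (d k) => H1 H2 H3.
have rr : Num.sqrt (r ^+ 2) = r by rewrite sqrtr_sqr ger0_norm // ltW.
have [hle|hlt] := leP (aiie_phi D eta b 0) (r ^+ 2).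
  rewrite H1 // mul0r; split => //; split => //.
  rewrite H3 H1 // norm_step // -{1}rr ler_sqrt //.
  by rewrite sqr_ge0.
have [lp lphi] := H2 hlt.
have nd : norm2 (d k.+1) = r by rewrite H3 norm_step ?ltW // lphi rr.
by rewrite nd subrr mulr0; split; [exact: ltW|split].
Qed.
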